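(* Assume $D_1=D_2=D$ and, for $\mu>\mu_{c_1}(D,D)$, define $$A(\mu)=Z(\mu)\Bigl(\frac{D}{\gamma_2\lambda_Z}-f_2'(\lambda_Z)\Bigr)-\lambda_Zf_1'(N(\mu)),$$ where $N(\mu)=N(\mu,D,D)$, $Z(\mu)=Z(\mu,D,D)$, $\lambda_Z=\lambda_Z(D)$. The characteristic polynomial of the Jacobian $J(E_2(\mu))$ of $( * )$ at $E_2(\mu)$ is $(-D-x)\bigl(x^2-A(\mu)x-B(\mu)C(\mu)\bigr)$ with $B(\mu)=-(\lambda_Zf_1'(N(\mu))+D)/\gamma_2$ and $C(\mu)=\gamma_2Z(\mu)f_2'(\lambda_Z)$. (1) If $\frac{D}{\gamma_2\lambda_Z}>f_2'(\lambda_Z)$, then there exists $\mu_{c_2}>\mu_{c_1}(D,D)$ with $A(\mu_{c_2})=0$; at $\mu=\mu_{c_2}$, $J(E_2(\mu_{c_2}))$ has the eigenvalue $-D$ and a pair of nonzero purely imaginary complex conjugate eigenvalues, and for all $\mu$ in a neighborhood of $\mu_{c_2}$, $J(E_2(\mu))$ has the eigenvalue $-D$ and a pair of nonreal complex conjugate eigenvalues with real part $A(\mu)/2$. (2) If in addition $f_1$ is twice differentiable and $f_1''(N(\mu_{c_2}))<0$, then $A'(\mu_{c_2})>0$ (derivative in $\mu$), so the real part of the complex pair crosses zero with positive speed at $\mu_{c_2}$. (3) If in addition $f_1''(N)<0$ for all $N\ge0$, then $\mu_{c_2}$ is the unique zero of $A$ on $(\mu_{c_1}(D,D),\infty)$.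
   Context: Standing setup. Let $D>0$, $\gamma_1>0$, $\gamma_2>0$ be constants and $\mu>0$ a parameter. Let $f_1,f_2:[0,\infty)\to[0,\infty)$ be continuously differentiable and bounded, with $f_i(0)=0$, $f_i'(x)>0$ for all $x\ge 0$, $\lim_{N\to\infty}f_1(N)>D/\gamma_1$ and $\lim_{P\to\infty}f_2(P)>D/\gamma_2$. Here $D_1=D_2=D$, so the system $( * )$ is $$\frac{dN}{dt}=(\mu-N)D-Pf_1(N),\quad \frac{dP}{dt}=\gamma_1Pf_1(N)-DP-Zf_2(P),\quad \frac{dZ}{dt}=\gamma_2Zf_2(P)-DZ.$$ $\lambda_P(D)$ is the unique number with $f_1(\lambda_P(D))=D/\gamma_1$, $\lambda_Z(D)$ the unique number with $f_2(\lambda_Z(D))=D/\gamma_2$, and $\mu_{c_1}(D,D)=\lambda_P(D)+\lambda_Z(D)/\gamma_1$. For $\mu>\mu_{c_1}(D,D)$, $N(\mu,D,D)$ is the unique solution $N\in(0,\mu)$ of $(\mu-N)D-\lambda_Z(D)f_1(N)=0$, $Z(\mu,D,D)=(\gamma_2/D)\lambda_Z(D)\bigl(\gamma_1f_1(N(\mu,D,D))-D\bigr)>0$, and $E_2(\mu)=(N(\mu,D,D),\lambda_Z(D),Z(\mu,D,D))$ is the coexistence equilibrium. *)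

(* Defs.v *)
From Stdlib Require Import Reals Lra.
Open Scope R_scope.

Definition Cx : Type := (R * R)%type.
Definition RtoC (a : R) : Cx := (a, 0).
Definition Cadd (z w : Cx) : Cx := (fst z + fst w, snd z + snd w).
Definition Copp (z : Cx) : Cx := (- fst z, - snd z).
Definition Csub (z w : Cx) : Cx := Cadd z (Copp w).
Definition Cmul (z w : Cx) : Cx :=
  (fst z * fst w - snd z * snd w, fst z * snd w + snd z * fst w).

Definition det3C (M : nat -> nat -> Cx) : Cx :=
  Csub
   (Cadd (Cadd (Cmul (M 0%nat 0%nat) (Cmul (M 1%nat 1%nat) (M 2%nat 2%nat)))
               (Cmul (M 0%nat 1%nat) (Cmul (M 1%nat 2%nat) (M 2%nat 0%nat))))
         (Cmul (M 0%nat 2%nat) (Cmul (M 1%nat 0%nat) (M 2%nat 1%nat))))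
   (Cadd (Cadd (Cmul (M 0%nat 2%nat) (Cmul (M 1%nat 1%nat) (M 2%nat 0%nat)))
               (Cmul (M 0%nat 1%nat) (Cmul (M 1%nat 0%nat) (M 2%nat 2%nat))))
         (Cmul (M 0%nat 0%nat) (Cmul (M 1%nat 2%nat) (M 2%nat 1%nat)))).

Definition charpoly3 (J : nat -> nat -> R) (z : Cx) : Cx :=
  det3C (fun i j => Csub (RtoC (J i j)) (if Nat.eqb i j then z else RtoC 0)).

Definition is_eigenvalue (J : nat -> nat -> R) (z : Cx) : Prop :=
  charpoly3 J z = RtoC 0.

Definition deriv_on_nonneg (f f' : R -> R) : Prop :=
  forall x, 0 <= x -> forall eps, 0 < eps -> exists delta, 0 < delta /\
    forall y, 0 <= y -> y <> x -> Rabs (y - x) < delta ->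
      Rabs ((f y - f x) / (y - x) - f' x) < eps.

Definition continuous_on_nonneg (g : R -> R) : Prop :=
  forall x, 0 <= x -> forall eps, 0 < eps -> exists delta, 0 < delta /\
    forall y, 0 <= y -> Rabs (y - x) < delta -> Rabs (g y - g x) < eps.

Definition limit_at_infty (f : R -> R) (L : R) : Prop :=
  forall eps, 0 < eps -> exists M, forall x, M <= x -> Rabs (f x - L) < eps.

(* Standing hypotheses on a response function f : [0,oo) -> [0,oo)
   with derivative f', and c the threshold (D/gamma_i) for its limit. *)
Definition response_fun (f f' : R -> R) (c : R) : Prop :=
  (forall x, 0 <= x -> 0 <= f x) /\
  deriv_on_nonneg f f' /\ continuous_on_nonneg f' /\
  (exists M, forall x, 0 <= x -> f x <= M) /\
  f 0 = 0 /\
  (forall x, 0 <= x -> 0 < f' x) /\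
  (exists L, limit_at_infty f L /\ c < L).

Definition field (D g1 g2 mu : R) (f1 f2 : R -> R) (i : nat) (N P Z : R) : R :=
  match i with
  | 0%nat => (mu - N) * D - P * f1 N
  | 1%nat => g1 * P * f1 N - D * P - Z * f2 P
  | _ => g2 * Z * f2 P - D * Z
  end.

Definition is_jacobian (F : nat -> R -> R -> R -> R) (x y z : R)
  (J : nat -> nat -> R) : Prop :=
  forall i, (i < 3)%nat ->
    derivable_pt_lim (fun t => F i t y z) x (J i 0%nat) /\
    derivable_pt_lim (fun t => F i x t z) y (J i 1%nat) /\
    derivable_pt_lim (fun t => F i x y t) z (J i 2%nat).

(* Z(mu,D,D), given N = N(mu,D,D) and lamZ = lambda_Z(D). *)
Definition Zeq (D g1 g2 lamZ : R) (f1 : R -> R) (N : R) : R :=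
  (g2 / D) * lamZ * (g1 * f1 N - D).

(* A(mu), B(mu), C(mu) as functions of N = N(mu). *)
Definition Acoef (D g1 g2 lamZ : R) (f1 f1' f2' : R -> R) (N : R) : R :=
  Zeq D g1 g2 lamZ f1 N * (D / (g2 * lamZ) - f2' lamZ) - lamZ * f1' N.
Definition Bcoef (D g2 lamZ : R) (f1' : R -> R) (N : R) : R :=
  - (lamZ * f1' N + D) / g2.
Definition Ccoef (D g1 g2 lamZ : R) (f1 f2' : R -> R) (N : R) : R :=
  g2 * Zeq D g1 g2 lamZ f1 N * f2' lamZ.

(* Main.v *)
Require Import Defs.
From Stdlib Require Import Reals Lra Lia Ranalysis5 FunctionalExtensionality.
Open Scope R_scope.


Lemma deriv_int f f' x : deriv_on_nonneg f f' -> 0 < x -> derivable_pt_lim f x (f' x).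
Proof.
  intros H Hx eps Heps.
  destruct (H x (Rlt_le _ _ Hx) eps Heps) as [d [Hd Hy]].
  assert (Hm : 0 < Rmin d x) by (apply Rmin_pos; lra).
  exists (mkposreal _ Hm). intros h Hh0 Hh. simpl in Hh.
  specialize (Hy (x+h)). replace (x+h-x) with h in Hy by ring.
  apply Rabs_def2 in Hh. pose proof (Rmin_l d x). pose proof (Rmin_r d x).
  apply Hy; [lra | lra | apply Rabs_def1; lra].
Qed.

Lemma cont_int g x : continuous_on_nonneg g -> 0 < x -> continuity_pt g x.
Proof.
  intros H Hx. unfold continuity_pt, continue_in, limit1_in, limit_in.
  intros eps Heps. destruct (H x (Rlt_le _ _ Hx) eps Heps) as [d [Hd Hy]].
  exists (Rmin d x). split; [apply Rmin_pos; lra|].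
  intros y [_ Hyd]. simpl in *. unfold R_dist in *.
  apply Rabs_def2 in Hyd. pose proof (Rmin_l d x). pose proof (Rmin_r d x).
  apply Hy; [lra | apply Rabs_def1; lra].
Qed.

Lemma incr_pos f f' x y : (forall t, 0 < t -> derivable_pt_lim f t (f' t)) ->
  (forall t, 0 < t -> 0 < f' t) -> 0 < x -> x < y -> f x < f y.
Proof.
  intros Hd Hp Hx Hxy.
  destruct (MVT_cor2 f f' x y Hxy) as [c [Hc1 Hc2]].
  { intros c Hc. apply Hd. lra. }
  assert (0 < f' c) by (apply Hp; lra). nra.
Qed.

Lemma decr_neg f f' x y : (forall t, 0 < t -> derivable_pt_lim f t (f' t)) ->
  (forall t, 0 < t -> f' t < 0) -> 0 < x -> x < y -> f y < f x.
Proof.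
  intros Hd Hp Hx Hxy.
  destruct (MVT_cor2 f f' x y Hxy) as [c [Hc1 Hc2]].
  { intros c Hc. apply Hd. lra. }
  assert (f' c < 0) by (apply Hp; lra). nra.
Qed.

Lemma dpl_ext f g x l : (forall t, f t = g t) -> derivable_pt_lim g x l -> derivable_pt_lim f x l.
Proof. intros H; replace f with g; auto. apply functional_extensionality; auto. Qed.

Lemma cpt_ext f g x : (forall t, f t = g t) -> continuity_pt g x -> continuity_pt f x.
Proof. intros H; replace f with g; auto. apply functional_extensionality; auto. Qed.

Lemma dlin0 a c x : derivable_pt_lim (fun t => a*t + c) x a.
Proof.
  assert (H : derivable_pt_lim (fun t => a*t + c) x (a*1 + 0)).
  { apply (derivable_pt_lim_plus (fun t => a*t) (fun _ => c)).
    apply (derivable_pt_lim_scal id). apply derivable_pt_lim_id.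
    apply derivable_pt_lim_const. }
  replace (a*1+0) with a in H by ring. exact H.
Qed.

Lemma dlin2 f h x l1 l2 b e c : derivable_pt_lim f x l1 -> derivable_pt_lim h x l2 ->
  derivable_pt_lim (fun t => b * f t + e * h t + c) x (b*l1 + e*l2).
Proof.
  intros H1 H2.
  replace (b*l1 + e*l2) with ((b*l1 + e*l2) + 0) by ring.
  apply (derivable_pt_lim_plus (fun t => b*f t + e * h t) (fun _ => c)).
  apply (derivable_pt_lim_plus (fun t => b*f t) (fun t => e * h t)).
  apply (derivable_pt_lim_scal f); auto.
  apply (derivable_pt_lim_scal h); auto.
  apply derivable_pt_lim_const.
Qed.

Lemma dlin f x l a b c : derivable_pt_lim f x l ->
  derivable_pt_lim (fun t => a*t + b*f t + c) x (a + b*l).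
Proof.
  intros H. replace (a + b*l) with (a*1 + b*l) by ring.
  apply dlin2; auto. apply derivable_pt_lim_id.
Qed.

Lemma inv_close q p e : 1 <= q -> 1 <= p -> Rabs (q - p) < e -> Rabs (/q - /p) < e.
Proof.
  intros Hq Hp H.
  replace (/q - /p) with ((p - q) * (/q * /p)) by (field; lra).
  rewrite Rabs_mult. rewrite (Rabs_pos_eq (/q * /p)).
  2:{ apply Rlt_le, Rmult_lt_0_compat; apply Rinv_0_lt_compat; lra. }
  assert (/q <= 1) by (rewrite <- Rinv_1; apply Rinv_le_contravar; lra).
  assert (/p <= 1) by (rewrite <- Rinv_1; apply Rinv_le_contravar; lra).
  assert (0 < /q) by (apply Rinv_0_lt_compat; lra).
  assert (0 < /p) by (apply Rinv_0_lt_compat; lra).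
  rewrite Rabs_minus_sym. pose proof (Rabs_pos (q - p)).
  assert (/q * /p <= 1) by nra. nra.
Qed.

Lemma quad_eig (P : Cx -> Cx) (a b c d : R) :
  (forall x, P x = Cmul (Csub (RtoC (-d)) x) (Csub (Csub (Cmul x x) (Cmul (RtoC a) x)) (RtoC (b*c)))) ->
  a*a + 4*(b*c) < 0 ->
  P (RtoC (-d)) = RtoC 0 /\ exists w, w <> 0 /\ P (a/2, w) = RtoC 0 /\ P (a/2, -w) = RtoC 0.
Proof.
  intros HP Hd. split.
  { rewrite HP. unfold Cmul, Csub, Cadd, Copp, RtoC; simpl. f_equal; ring. }
  set (s := sqrt (-(a*a+4*(b*c)))).
  assert (Hs : s * s = -(a*a+4*(b*c))) by (apply sqrt_sqrt; lra).
  assert (Hs0 : 0 < s) by (apply sqrt_lt_R0; lra).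
  exists (s/2). split; [lra|].
  assert (HY : forall w, w * w = s * s / 4 ->
    Csub (Csub (Cmul (a/2, w) (a/2, w)) (Cmul (RtoC a) (a/2, w))) (RtoC (b*c)) = (0,0)).
  { intros w Hw. unfold Cmul, Csub, Cadd, Copp, RtoC; simpl. f_equal.
    - rewrite Hs in Hw. lra.
    - lra. }
  split; rewrite HP, HY; [ | nra | | nra];
  unfold Cmul, Csub, Cadd, Copp, RtoC; simpl; f_equal; ring.
Qed.

Theorem theorem3p5
  (D g1 g2 : R) (f1 f1' f2 f2' : R -> R)
  (HD : 0 < D) (Hg1 : 0 < g1) (Hg2 : 0 < g2)
  (Hf1 : response_fun f1 f1' (D / g1))
  (Hf2 : response_fun f2 f2' (D / g2))
  (lamP lamZ : R)
  (HlamP : 0 <= lamP /\ f1 lamP = D / g1)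
  (HlamZ : 0 <= lamZ /\ f2 lamZ = D / g2)
  (Nf : R -> R)
  (HN : forall mu, lamP + lamZ / g1 < mu ->
          0 < Nf mu < mu /\ (mu - Nf mu) * D - lamZ * f1 (Nf mu) = 0) :
  let muc1 := lamP + lamZ / g1 in
  let A := fun mu => Acoef D g1 g2 lamZ f1 f1' f2' (Nf mu) in
  let B := fun mu => Bcoef D g2 lamZ f1' (Nf mu) in
  let C := fun mu => Ccoef D g1 g2 lamZ f1 f2' (Nf mu) in
  let Jac := fun mu J =>
    is_jacobian (field D g1 g2 mu f1 f2) (Nf mu) lamZ
                (Zeq D g1 g2 lamZ f1 (Nf mu)) J in
  (* characteristic polynomial of J(E2(mu)) *)
  (forall mu J, muc1 < mu -> Jac mu J ->
     forall x : Cx,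
       charpoly3 J x =
       Cmul (Csub (RtoC (- D)) x)
            (Csub (Csub (Cmul x x) (Cmul (RtoC (A mu)) x))
                  (RtoC (B mu * C mu)))) /\
  (D / (g2 * lamZ) > f2' lamZ ->
   exists muc2, muc1 < muc2 /\ A muc2 = 0 /\
     (* (1) at mu = muc2 *)
     (forall J, Jac muc2 J ->
        is_eigenvalue J (RtoC (- D)) /\
        exists w, w <> 0 /\ is_eigenvalue J (0, w) /\ is_eigenvalue J (0, - w)) /\
     (* (1) in a neighbourhood of muc2 *)
     (exists delta, 0 < delta /\
        forall mu, Rabs (mu - muc2) < delta ->
          muc1 < mu /\
          forall J, Jac mu J ->
            is_eigenvalue J (RtoC (- D)) /\
            exists w, w <> 0 /\ is_eigenvalue J (A mu / 2, w) /\
                      is_eigenvalue J (A mu / 2, - w)) /\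
     (* (2) *)
     (forall f1'' : R -> R, deriv_on_nonneg f1' f1'' ->
        f1'' (Nf muc2) < 0 ->
        exists a, derivable_pt_lim A muc2 a /\ 0 < a) /\
     (* (3) *)
     (forall f1'' : R -> R, deriv_on_nonneg f1' f1'' ->
        (forall x, 0 <= x -> f1'' x < 0) ->
        forall mu, muc1 < mu -> A mu = 0 -> mu = muc2)).
Proof.
  intros muc1 A B C Jac.
  destruct Hf1 as [f1pos [f1d [f1'c [[M1 HM1] [f10 [f1'pos [L1 [HL1 HL1c]]]]]]]].
  destruct Hf2 as [f2pos [f2d [f2'c [[M2 HM2] [f20 [f2'pos [L2 [HL2 HL2c]]]]]]]].
  destruct HlamP as [HlamP0 HlamPf]. destruct HlamZ as [HlamZ0 HlamZf].
  assert (Dg1 : 0 < D / g1) by (apply Rdiv_lt_0_compat; lra).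
  assert (Dg2 : 0 < D / g2) by (apply Rdiv_lt_0_compat; lra).
  assert (lamPpos : 0 < lamP).
  { destruct HlamP0 as [h|h]; auto. subst lamP. lra. }
  assert (lamZpos : 0 < lamZ).
  { destruct HlamZ0 as [h|h]; auto. subst lamZ. lra. }
  assert (Hd1 : forall x, 0 < x -> derivable_pt_lim f1 x (f1' x))
    by (intros; apply deriv_int; auto).
  assert (Hd2 : forall x, 0 < x -> derivable_pt_lim f2 x (f2' x))
    by (intros; apply deriv_int; auto).
  assert (f1'p : forall x, 0 < x -> 0 < f1' x) by (intros; apply f1'pos; lra).
  assert (f1inc : forall x y, 0 < x -> x < y -> f1 x < f1 y)
    by (intros; eapply incr_pos; eauto).
  assert (f1le : forall x y, 0 < x -> x <= y -> f1 x <= f1 y).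
  { intros x y Hx [h|h]; [left; apply f1inc; auto | subst; lra]. }
  assert (iD : 0 < / D) by (apply Rinv_0_lt_compat; lra).
  set (m := fun N => N + lamZ * f1 N / D).
  assert (Hm : forall mu, muc1 < mu -> mu = m (Nf mu)).
  { intros mu Hmu. destruct (HN mu Hmu) as [_ He]. unfold m. field_simplify_eq; lra. }
  assert (Hmgap : forall x y, 0 < x -> x <= y -> y - x <= m y - m x).
  { intros x y Hx Hxy. pose proof (f1le x y Hx Hxy). unfold m, Rdiv.
    assert (0 <= lamZ * (f1 y - f1 x) * / D).
    { apply Rmult_le_pos; [apply Rmult_le_pos|]; lra. }
    nra. }
  assert (Hmstrict : forall x y, 0 < x -> x < y -> m x < m y).
  { intros x y Hx Hxy. pose proof (Hmgap x y Hx (Rlt_le _ _ Hxy)). lra. }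
  assert (Hminj : forall x y, 0 < x -> 0 < y -> m x = m y -> x = y).
  { intros x y Hx Hy He. destruct (Rtotal_order x y) as [h|[h|h]]; auto.
    - pose proof (Hmstrict x y Hx h); lra.
    - pose proof (Hmstrict y x Hy h); lra. }
  assert (HmlamP : m lamP = muc1).
  { unfold m, muc1. rewrite HlamPf. field. lra. }
  assert (HNpos : forall mu, muc1 < mu -> 0 < Nf mu) by (intros mu h; apply (HN mu h)).
  assert (HNgt : forall mu, muc1 < mu -> lamP < Nf mu).
  { intros mu Hmu. destruct (Rlt_le_dec lamP (Nf mu)) as [h|h]; auto.
    pose proof (Hmgap (Nf mu) lamP (HNpos mu Hmu) h). pose proof (Hm mu Hmu).
    assert (m (Nf mu) <= m lamP).
    { destruct h as [h|h]. pose proof (Hmstrict _ _ (HNpos mu Hmu) h); lra. rewrite h; lra. }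
    lra. }
  assert (Hlip : forall mu mu', muc1 < mu -> muc1 < mu' -> Rabs (Nf mu - Nf mu') <= Rabs (mu - mu')).
  { intros mu mu' H1 H2. pose proof (Hm mu H1). pose proof (Hm mu' H2).
    destruct (Rle_dec (Nf mu') (Nf mu)) as [h|h].
    - pose proof (Hmgap _ _ (HNpos mu' H2) h).
      rewrite (Rabs_pos_eq (Nf mu - Nf mu')) by lra. rewrite Rabs_pos_eq; lra.
    - assert (h' : Nf mu <= Nf mu') by lra. pose proof (Hmgap _ _ (HNpos mu H1) h').
      rewrite (Rabs_left1 (Nf mu - Nf mu')) by lra. rewrite Rabs_left1; lra. }
  assert (Zpos : forall N, lamP < N -> 0 < Zeq D g1 g2 lamZ f1 N).
  { intros N HNl. pose proof (f1inc lamP N lamPpos HNl). rewrite HlamPf in H.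
    unfold Zeq. assert (0 < g1 * f1 N - D).
    { apply Rmult_lt_compat_l with (r := g1) in H; auto. field_simplify in H; lra. }
    apply Rmult_lt_0_compat; auto. apply Rmult_lt_0_compat; auto. apply Rdiv_lt_0_compat; lra. }
  assert (Hchar : forall mu J, muc1 < mu -> Jac mu J ->
     forall x : Cx,
       charpoly3 J x =
       Cmul (Csub (RtoC (- D)) x)
            (Csub (Csub (Cmul x x) (Cmul (RtoC (A mu)) x))
                  (RtoC (B mu * C mu)))).
  { intros mu J Hmu HJ x. unfold Jac, is_jacobian in HJ.
    set (N := Nf mu) in *. set (Zv := Zeq D g1 g2 lamZ f1 N) in *.
    assert (HN0 : 0 < N) by (apply HNpos; auto).
    assert (HZ0 : 0 < Zv) by (apply Zpos; apply HNgt; auto).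
    destruct (HJ 0%nat ltac:(lia)) as [J00 [J01 J02]].
    destruct (HJ 1%nat ltac:(lia)) as [J10 [J11 J12]].
    destruct (HJ 2%nat ltac:(lia)) as [J20 [J21 J22]].
    assert (e00 : J 0%nat 0%nat = -D + (-lamZ) * f1' N).
    { eapply uniqueness_limite; [exact J00|].
      apply (dpl_ext _ (fun t => (-D)*t + (-lamZ)*f1 t + mu*D)); [intros t; simpl; ring|].
      apply dlin; apply Hd1; auto. }
    assert (e01 : J 0%nat 1%nat = - f1 N).
    { eapply uniqueness_limite; [exact J01|].
      apply (dpl_ext _ (fun t => (- f1 N)*t + (mu-N)*D)); [intros t; simpl; ring|].
      apply dlin0. }
    assert (e02 : J 0%nat 2%nat = 0).
    { eapply uniqueness_limite; [exact J02|].
      apply (dpl_ext _ (fun t => 0*t + ((mu-N)*D - lamZ * f1 N))); [intros t; simpl; ring|].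
      apply dlin0. }
    assert (e10 : J 1%nat 0%nat = 0 + (g1*lamZ) * f1' N).
    { eapply uniqueness_limite; [exact J10|].
      apply (dpl_ext _ (fun t => 0*t + (g1*lamZ)*f1 t + (-D*lamZ - Zv*f2 lamZ))); [intros t; simpl; ring|].
      apply dlin; apply Hd1; auto. }
    assert (e11 : J 1%nat 1%nat = (g1 * f1 N - D) + (-Zv) * f2' lamZ).
    { eapply uniqueness_limite; [exact J11|].
      apply (dpl_ext _ (fun t => (g1 * f1 N - D)*t + (-Zv)*f2 t + 0)); [intros t; simpl; ring|].
      apply dlin; apply Hd2; auto. }
    assert (e12 : J 1%nat 2%nat = - f2 lamZ).
    { eapply uniqueness_limite; [exact J12|].
      apply (dpl_ext _ (fun t => (- f2 lamZ)*t + (g1*lamZ*f1 N - D*lamZ))); [intros t; simpl; ring|].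
      apply dlin0. }
    assert (e20 : J 2%nat 0%nat = 0).
    { eapply uniqueness_limite; [exact J20|].
      apply (dpl_ext _ (fun t => 0*t + (g2*Zv*f2 lamZ - D*Zv))); [intros t; simpl; ring|].
      apply dlin0. }
    assert (e21 : J 2%nat 1%nat = 0 + (g2*Zv) * f2' lamZ).
    { eapply uniqueness_limite; [exact J21|].
      apply (dpl_ext _ (fun t => 0*t + (g2*Zv)*f2 t + (-D*Zv))); [intros t; simpl; ring|].
      apply dlin; apply Hd2; auto. }
    assert (e22 : J 2%nat 2%nat = g2 * f2 lamZ - D).
    { eapply uniqueness_limite; [exact J22|].
      apply (dpl_ext _ (fun t => (g2 * f2 lamZ - D)*t + 0)); [intros t; simpl; ring|].
      apply dlin0. }
    unfold charpoly3, det3C. simpl.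
    rewrite e00, e01, e02, e10, e11, e12, e20, e21, e22.
    unfold A, B, C, Acoef, Bcoef, Ccoef. fold N. fold Zv.
    assert (HZe : Zv * (D / (g2 * lamZ)) = g1 * f1 N - D).
    { unfold Zv, Zeq. field. lra. }
    rewrite HlamZf. destruct x as [xr xi].
    unfold Cmul, Csub, Cadd, Copp, RtoC; simpl.
    replace (g2 * (D / g2) - D) with 0 by (field; lra).
    unfold Zv, Zeq. clearbody N.
    f_equal; field; lra. }
  split; [exact Hchar|].
  intros Hk.
  set (k := D/(g2*lamZ) - f2' lamZ).
  assert (kpos : 0 < k) by (unfold k; lra).
  set (c1 := g2 / D * lamZ * k).
  assert (c1pos : 0 < c1).
  { unfold c1. apply Rmult_lt_0_compat; auto. apply Rmult_lt_0_compat; auto.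
    apply Rdiv_lt_0_compat; lra. }
  set (ah := fun N => c1 * (g1 * f1 N - D) - lamZ * f1' N).
  assert (Hah : forall N, Acoef D g1 g2 lamZ f1 f1' f2' N = ah N).
  { intros; unfold Acoef, Zeq, ah, c1, k. ring. }
  assert (cf1 : forall N, 0 < N -> continuity_pt f1 N).
  { intros N HN0. apply derivable_continuous_pt. exists (f1' N). apply Hd1; auto. }
  assert (cf1' : forall N, 0 < N -> continuity_pt f1' N).
  { intros N HN0. apply cont_int; auto. }
  assert (cst : forall c x, continuity_pt (fun _ => c) x).
  { intros. apply continuity_pt_const. intros ? ?; reflexivity. }
  assert (ahc : forall N, 0 < N -> continuity_pt ah N).
  { intros N HN0. unfold ah.
    apply continuity_pt_minus.
    apply continuity_pt_mult. apply cst.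
    apply continuity_pt_minus. apply continuity_pt_mult. apply cst. apply cf1; auto. apply cst.
    apply continuity_pt_mult. apply cst. apply cf1'; auto. }
  set (d0 := g1 * L1 - D).
  assert (d0pos : 0 < d0).
  { unfold d0. apply Rmult_lt_compat_l with (r := g1) in HL1c; auto.
    field_simplify in HL1c; lra. }
  set (Q := g2 * k / D).
  assert (Qpos : 0 < Q) by (unfold Q; apply Rdiv_lt_0_compat; [apply Rmult_lt_0_compat|]; lra).
  assert (c1Q : c1 = lamZ * Q) by (unfold c1, Q; field; lra).
  set (eps := Rmin (d0/(2*g1)) (Q*d0/8)).
  assert (epspos : 0 < eps).
  { unfold eps. apply Rmin_pos; apply Rdiv_lt_0_compat; nra. }
  assert (eps1 : eps <= d0/(2*g1)) by apply Rmin_l.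
  assert (eps2 : eps <= Q*d0/8) by apply Rmin_r.
  destruct (HL1 eps epspos) as [M HM].
  set (N1 := Rmax M (lamP+1)).
  assert (HN1a : M <= N1) by apply Rmax_l.
  assert (HN1b : lamP + 1 <= N1) by apply Rmax_r.
  destruct (MVT_cor2 f1 f1' N1 (N1+1)) as [c [Hc1 Hc2]]; [lra| |].
  { intros c Hc. apply Hd1. lra. }
  assert (HMa := HM N1 HN1a). assert (HMb := HM (N1+1) ltac:(lra)).
  apply Rabs_def2 in HMa. apply Rabs_def2 in HMb.
  assert (f1c : f1 N1 < f1 c) by (apply f1inc; lra).
  assert (f1'cc : f1' c < 2 * eps) by lra.
  assert (ahcpos : 0 < ah c).
  { unfold ah. rewrite c1Q.
    assert (g1 * f1 c - D > d0 / 2).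
    { assert (g1 * eps <= d0/2).
      { apply Rmult_le_compat_l with (r := g1) in eps1; [|lra].
        replace (g1 * (d0 / (2*g1))) with (d0/2) in eps1 by (field; lra). lra. }
      unfold d0 in *. nra. }
    assert (Q * (g1 * f1 c - D) > 4 * eps) by nra.
    nra. }
  assert (ahlamP : ah lamP < 0).
  { unfold ah. rewrite HlamPf. replace (g1 * (D / g1) - D) with 0 by (field; lra).
    assert (0 < f1' lamP) by auto. nra. }
  destruct (IVT_interv ah lamP c) as [Ns [[HNs1 HNs2] HNs3]].
  { intros a Ha. apply ahc. lra. }
  { lra. }
  { exact ahlamP. }
  { exact ahcpos. }
  assert (HNs : lamP < Ns).
  { destruct HNs1 as [h|h]; auto. subst Ns. lra. }
  assert (HNs0 : 0 < Ns) by lra.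
  exists (m Ns).
  assert (Hmus : muc1 < m Ns) by (rewrite <- HmlamP; apply Hmstrict; lra).
  assert (HNfs : Nf (m Ns) = Ns).
  { apply Hminj; auto. symmetry. apply Hm. auto. }
  assert (HA0 : A (m Ns) = 0).
  { unfold A. rewrite HNfs, Hah. exact HNs3. }
  set (c2 := - (g2 / D) * lamZ * f2' lamZ).
  assert (c2neg : c2 < 0).
  { unfold c2. assert (0 < g2 / D * lamZ * f2' lamZ).
    { apply Rmult_lt_0_compat. apply Rmult_lt_0_compat; auto. apply Rdiv_lt_0_compat; lra.
      apply f2'pos; lra. }
    lra. }
  set (dh := fun N => ah N * ah N + 4 * (c2 * (lamZ * f1' N + D) * (g1 * f1 N - D))).
  assert (Hdh : forall N, Acoef D g1 g2 lamZ f1 f1' f2' N * Acoef D g1 g2 lamZ f1 f1' f2' N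
      + 4 * (Bcoef D g2 lamZ f1' N * Ccoef D g1 g2 lamZ f1 f2' N) = dh N).
  { intros N. rewrite Hah. unfold dh, Bcoef, Ccoef, Zeq, c2. field. lra. }
  assert (dhNs : dh Ns < 0).
  { unfold dh. rewrite HNs3.
    assert (0 < g1 * f1 Ns - D).
    { pose proof (f1inc lamP Ns lamPpos HNs). rewrite HlamPf in H.
      apply Rmult_lt_compat_l with (r := g1) in H; auto. field_simplify in H; lra. }
    assert (0 < lamZ * f1' Ns + D) by (assert (0 < f1' Ns) by auto; nra).
    assert (c2 * (lamZ * f1' Ns + D) < 0) by nra. nra. }
  assert (dhc : continuity_pt dh Ns).
  { unfold dh. apply continuity_pt_plus. apply continuity_pt_mult; apply ahc; auto.
    apply continuity_pt_mult. apply cst.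
    apply continuity_pt_mult. apply continuity_pt_mult. apply cst.
    apply continuity_pt_plus. apply continuity_pt_mult. apply cst. apply cf1'; auto. apply cst.
    apply continuity_pt_minus. apply continuity_pt_mult. apply cst. apply cf1; auto. apply cst. }
  destruct (dhc (- dh Ns) ltac:(lra)) as [e1 [He1 Hdhe]].
  assert (Hdhn : forall N, Rabs (N - Ns) < e1 -> dh N < 0).
  { intros N HNe. destruct (Req_dec N Ns) as [h|h]; [subst; lra|].
    assert (Hx := Hdhe N (conj (conj I (not_eq_sym h)) HNe)). simpl in Hx. unfold R_dist in Hx.
    apply Rabs_def2 in Hx. lra. }
  split; [exact Hmus|]. split; [exact HA0|].
  split.
  { intros J HJ.
    destruct (quad_eig (charpoly3 J) (A (m Ns)) (B (m Ns)) (C (m Ns)) D (Hchar _ J Hmus HJ))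
      as [H1 [w [Hw [H2 H3]]]].
    { unfold A, B, C. rewrite Hdh, HNfs. exact dhNs. }
    split; [exact H1|]. exists w. split; [exact Hw|].
    rewrite HA0 in H2, H3. replace (0/2) with 0 in H2, H3 by field. split; assumption. }
  split.
  { exists (Rmin e1 (m Ns - muc1)). split; [apply Rmin_pos; lra|].
    intros mu Hmu. pose proof (Rmin_l e1 (m Ns - muc1)). pose proof (Rmin_r e1 (m Ns - muc1)).
    assert (Hmu1 : muc1 < mu) by (apply Rabs_def2 in Hmu; lra).
    split; [exact Hmu1|].
    intros J HJ.
    destruct (quad_eig (charpoly3 J) (A mu) (B mu) (C mu) D (Hchar _ J Hmu1 HJ))
      as [H1 [w [Hw [H2 H3]]]].
    { unfold A, B, C. rewrite Hdh. apply Hdhn.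
      pose proof (Hlip mu (m Ns) Hmu1 Hmus) as HL. rewrite HNfs in HL. lra. }
    split; [exact H1|]. exists w. auto. }
  split.
  { intros f1'' Hd'' Hneg.
    set (mp := 1 + lamZ / D * f1' Ns).
    assert (mp1 : 1 <= mp).
    { unfold mp. assert (0 < f1' Ns) by auto. assert (0 < lamZ / D) by (apply Rdiv_lt_0_compat; lra). nra. }
    assert (dm : derivable_pt_lim m Ns mp).
    { apply (dpl_ext _ (fun t => 1*t + (lamZ/D)*f1 t + 0)); [intros t; unfold m; field; lra|].
      apply dlin. apply Hd1; auto. }
    assert (dNf : derivable_pt_lim Nf (m Ns) (/mp)).
    { intros e He. destruct (dm e He) as [d1 Hd1'].
      assert (hpos : 0 < Rmin d1 (m Ns - muc1)) by (apply Rmin_pos; [apply cond_pos|lra]).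
      exists (mkposreal _ hpos). intros h Hh0 Hh. simpl in Hh.
      pose proof (Rmin_l d1 (m Ns - muc1)). pose proof (Rmin_r d1 (m Ns - muc1)).
      assert (Hmu1 : muc1 < m Ns + h) by (apply Rabs_def2 in Hh; lra).
      set (kk := Nf (m Ns + h) - Ns).
      assert (Hkk : Rabs kk <= Rabs h).
      { unfold kk. rewrite <- HNfs at 2. replace h with ((m Ns + h) - m Ns) at 2 by ring.
        apply Hlip; auto. }
      assert (Hmk : m (Ns + kk) = m Ns + h).
      { unfold kk. replace (Ns + (Nf (m Ns + h) - Ns)) with (Nf (m Ns+h)) by ring.
        symmetry; apply Hm; auto. }
      assert (kk0 : kk <> 0).
      { intro e0. rewrite e0, Rplus_0_r in Hmk. apply Hh0. lra. }
      assert (Hpos : 0 < Ns + kk).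
      { unfold kk. replace (Ns + (Nf (m Ns + h) - Ns)) with (Nf (m Ns+h)) by ring. auto. }
      specialize (Hd1' kk kk0 ltac:(lra)). rewrite Hmk in Hd1'.
      replace (m Ns + h - m Ns) with h in Hd1' by ring.
      assert (q1 : 1 <= h / kk).
      { replace (h / kk) with (1 + (h - kk) / kk) by (field; auto).
        destruct (Rlt_dec 0 kk) as [hk|hk].
        - pose proof (Hmgap Ns (Ns+kk) HNs0 ltac:(lra)) as G. rewrite Hmk in G.
          assert (0 <= (h - kk) / kk) by (apply Rle_mult_inv_pos; lra). lra.
        - assert (hk' : kk < 0) by lra.
          pose proof (Hmgap (Ns+kk) Ns Hpos ltac:(lra)) as G. rewrite Hmk in G.
          replace ((h - kk) / kk) with ((kk - h) / (- kk)) by (field; auto).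
          assert (0 <= (kk - h) / (- kk)) by (apply Rle_mult_inv_pos; lra). lra. }
      rewrite HNfs. change (Nf (m Ns + h) - Ns) with kk.
      replace (kk / h) with (/ (h / kk)) by (field; auto).
      apply inv_close; auto. }
    assert (da : derivable_pt_lim ah Ns (c1*g1*f1' Ns - lamZ * f1'' Ns)).
    { apply (dpl_ext _ (fun t => (c1*g1)*f1 t + (-lamZ)*f1' t + (-(c1*D)))); [intros; unfold ah; ring|].
      replace (c1*g1*f1' Ns - lamZ*f1'' Ns) with ((c1*g1)*f1' Ns + (-lamZ)*f1'' Ns) by ring.
      apply dlin2. apply Hd1; auto. apply deriv_int; auto. }
    exists ((c1*g1*f1' Ns - lamZ * f1'' Ns) * /mp). split.
    - apply (dpl_ext _ (comp ah Nf)).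
      { intros t. unfold A, comp. apply Hah. }
      apply derivable_pt_lim_comp. exact dNf. rewrite HNfs. exact da.
    - apply Rmult_lt_0_compat.
      + rewrite HNfs in Hneg. assert (0 < f1' Ns) by auto. assert (0 < c1 * g1) by (apply Rmult_lt_0_compat; lra). assert (0 < c1*g1*f1' Ns) by (apply Rmult_lt_0_compat; lra). assert (0 < lamZ * (- f1'' Ns)) by (apply Rmult_lt_0_compat; lra). lra.
      + apply Rinv_0_lt_compat; lra. }
  { intros f1'' Hd'' Hneg mu Hmu HA.
    assert (f1'dec : forall x y, 0 < x -> x < y -> f1' y < f1' x).
    { intros x y Hx Hxy. apply (decr_neg f1' f1''); auto.
      intros; apply deriv_int; auto. intros; apply Hneg; lra. }
    assert (ahinc : forall x y, 0 < x -> x < y -> ah x < ah y).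
    { intros x y Hx Hxy. unfold ah. pose proof (f1inc x y Hx Hxy).
      pose proof (f1'dec x y Hx Hxy). assert (0 < c1 * g1) by (apply Rmult_lt_0_compat; lra).
      assert (0 < c1*g1*(f1 y - f1 x)) by (apply Rmult_lt_0_compat; lra).
      assert (0 < lamZ*(f1' x - f1' y)) by (apply Rmult_lt_0_compat; lra). nra. }
    assert (HAmu : ah (Nf mu) = 0) by (rewrite <- Hah; exact HA).
    assert (HE : Nf mu = Ns).
    { destruct (Rtotal_order (Nf mu) Ns) as [h|[h|h]]; auto.
      - pose proof (ahinc _ _ (HNpos mu Hmu) h); lra.
      - pose proof (ahinc _ _ HNs0 h); lra. }
    rewrite (Hm mu Hmu), HE. reflexivity. }
Qed.
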